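(* For $x\in X(l_1,\dots,l_n,l_\infty)$ let $g(x)$ be the greatest common divisor of the numbers $m_{a,b}(x)$ of arcs joining the pairs $\{a,b\}$ of marked points of $x$. Then $g(hx)=g(x)$ for every $h\in J_n$.
   Context: Cactus group: $J_n$ is the group generated by $s_{p,q}$, $1\le p<q\le n$, subject to the relations $s_{p,q}^2=e$; $s_{p,q}s_{p',q'}=s_{p',q'}s_{p,q}$ if $[p,q]$ and $[p',q']$ are disjoint; $s_{p,q}s_{p',q'}s_{p,q}=s_{p+q-q',p+q-p'}$ if $p\le p'<q'\le q$. Arc diagrams: fix nonnegative integers $l_1,\dots,l_n,l_\infty$. On the boundary circle of a closed disc place $n+1$ marked positions: position $0$ (occupied by $z_\infty$) and positions $1,\dots,n$ following it clockwise. An arc diagram is a bijective assignment of labels $z_1,\dots,z_n$ to positions $1,\dots,n$ together with a finite collection of simple arcs in the disc, pairwise disjoint except at endpoints, each joining two distinct marked points, such that $z_j$ is an endpoint of exactly $l_j$ arcs ($j\in\{1,\dots,n,\infty\}$; $l_j$ is the valence). Parallel arcs are allowed; diagrams are up to isotopy, equivalently determined by the labelling and the number of arcs between each pair of marked points. $X(l_1,\dots,l_n,l_\infty)$ is the set of such diagrams. Action: $s_{p,q}$ ($1\le p<q\le n$) acts by cutting off positions $p,\dots,q$ with a chord $\ell$ (arcs isotoped to cross $\ell$ at most once), reflecting that region by the reflection reversing $\ell$ (label at position $p+t$ goes to position $q-t$, crossing points on $\ell$ reversed), leaving the rest unchanged and reconnecting arcs at $\ell$. Words act right to left; this is an action of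 $J_n$. *)

(* Defs.v *)
From mathcomp Require Import all_boot.
Set Implicit Arguments. Unset Strict Implicit. Unset Printing Implicit Defensive.

(* Marked positions on the boundary circle are 0,1,...,n in clockwise order;
   position 0 carries z_oo.  Labels: 0 stands for z_oo, j (1<=j<=n) for z_j.
   A diagram (up to isotopy) is its labelling [lab : position -> label] and
   the number [arcs a b] of arcs joining positions a and b. *)
Record diagram := Diagram { lab : nat -> nat; arcs : nat -> nat -> nat }.

(* Valences: [l 0] = l_oo and [l j] = l_j for 1 <= j <= n. *)
Definition is_arc_diagram (n : nat) (l : nat -> nat) (x : diagram) : Prop :=
  [/\ lab x 0 = 0,
      {in [pred i | 1 <= i <= n], forall i, 1 <= lab x i <= n}
    & {in [pred i | 1 <= i <= n] &, injective (lab x)}] /\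
  [/\ (forall a b, arcs x a b = arcs x b a),
      (forall a, arcs x a a = 0),
      (forall a b, n < a -> arcs x a b = 0),
      (* simple, pairwise disjoint arcs: no two arcs cross *)
      (forall a c b d, a < c -> c < b -> b < d -> arcs x a b = 0 \/ arcs x c d = 0)
    & (* z_j is an endpoint of exactly l_j arcs *)
      (forall i, i <= n -> \sum_(j < n.+1) arcs x i j = l (lab x i))].

Definition inside (p q i : nat) : bool := p <= i <= q.
Definition refl (p q i : nat) : nat := if inside p q i then p + q - i else i.

(* outer positions in the order met along the chord l, from its end near p
   to its end near q:  p-1, ..., 0, n, ..., q+1 *)
Definition outer_order (n p q : nat) : seq nat :=
  rev (iota 0 p) ++ rev (iota q.+1 (n - q)).
(* inner positions in the order met along l (same direction): p, ..., q *)
Definition inner_order (p q : nat) : seq nat := iota p (q - p).+1.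

(* outer endpoints of the arcs crossing l, in order along l *)
Definition cross_out (n p q : nat) (m : nat -> nat -> nat) : seq nat :=
  flatten [seq nseq (\sum_(a <- inner_order p q) m a o) o | o <- outer_order n p q].
(* inner endpoints of the crossing arcs after reflecting the region, in order
   along l (the reflection reverses l and maps endpoint a to p+q-a) *)
Definition cross_in_refl (n p q : nat) (m : nat -> nat -> nat) : seq nat :=
  flatten [seq nseq (\sum_(o <- outer_order n p q) m (refl p q a) o) a
          | a <- inner_order p q].

(* arcs after cutting, reflecting and reconnecting at l *)
Definition act_arcs (n p q : nat) (m : nat -> nat -> nat) (a b : nat) : nat :=
  let cr := zip (cross_in_refl n p q m) (cross_out n p q m) in
  if inside p q a && inside p q b then m (refl p q a) (refl p q b)
  else if ~~ inside p q a && ~~ inside p q b then m a b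
  else if inside p q a then count (pred1 (a, b)) cr
  else count (pred1 (b, a)) cr.

Definition act_s (n : nat) (pq : nat * nat) (x : diagram) : diagram :=
  Diagram (fun i => lab x (refl pq.1 pq.2 i)) (act_arcs n pq.1 pq.2 (arcs x)).

(* a word s_{p1,q1} ... s_{pk,qk} in the generators acts right to left *)
Definition act_word (n : nat) (w : seq (nat * nat)) (x : diagram) : diagram :=
  foldr (act_s n) x w.

Definition valid_gen (n : nat) (pq : nat * nat) : bool :=
  (1 <= pq.1) && (pq.1 < pq.2) && (pq.2 <= n).

Definition arc_gcd (n : nat) (x : diagram) : nat :=
  \big[gcdn/0]_(a < n.+1) \big[gcdn/0]_(b < n.+1 | a < b) arcs x a b.

(* Main.v *)
Require Import Defs.
From mathcomp Require Import all_boot zify.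
Set Implicit Arguments. Unset Strict Implicit.

Definition chunk {T} (g : nat) (s : seq T) := flatten [seq nseq g x | x <- s].

Lemma count_chunk T (P : pred T) g s : count P (chunk g s) = g * count P s.
Proof.
elim: s => [|x s IH] /=; first by rewrite muln0.
by rewrite count_cat IH count_nseq mulnDr mulnC.
Qed.

Lemma zip_nseq S T g (x : S) (y : T) : zip (nseq g x) (nseq g y) = nseq g (x, y).
Proof. by elim: g => //= g ->. Qed.

Lemma zip_nil_r S T (s : seq S) : zip s (@nil T) = [::].
Proof. by case: s. Qed.

Lemma zip_chunk S T g (s : seq S) (t : seq T) :
  zip (chunk g s) (chunk g t) = chunk g (zip s t).
Proof.
elim: s t => [|x s IH] t.
  by rewrite /chunk /=; case: (flatten _); case: t.
case: t => [|y t]; first by rewrite /chunk /=; case: (nseq g x ++ flatten _).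
by rewrite /chunk /= zip_cat ?size_nseq // zip_nseq; congr (_ ++ _); apply: IH.
Qed.

Lemma chunky_blocks (T : eqType) g (f : T -> nat) (s : seq T) :
  (forall x, x \in s -> g %| f x) ->
  exists s', flatten [seq nseq (f x) x | x <- s] = chunk g s'.
Proof.
elim: s => [|x s IH] H /=; first by exists [::].
have [s' ->] : exists s', flatten [seq nseq (f x) x | x <- s] = chunk g s'.
  by apply: IH => y ys; apply: H; rewrite inE ys orbT.
have /dvdnP [k ->] := H x (mem_head _ _).
exists (nseq k x ++ s'); rewrite /chunk map_cat flatten_cat; congr (_ ++ _).
by elim: k => //= k IHk; rewrite mulSn nseqD IHk.
Qed.

Lemma mem_flatten_nseq (T : eqType) (f : T -> nat) s j :
  j \in flatten [seq nseq (f a) a | a <- s] -> j \in s /\ 0 < f j.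
Proof.
elim: s => [|x s IH] //=; rewrite mem_cat => /orP [|/IH [h1 h2]].
  by rewrite mem_nseq => /andP [h /eqP ->]; rewrite mem_head.
by rewrite inE h1 orbT.
Qed.

Lemma count_flatten_nseq (T : eqType) (f : T -> nat) s j :
  uniq s -> j \in s -> count (pred1 j) (flatten [seq nseq (f a) a | a <- s]) = f j.
Proof.
elim: s => [|x s IH] //= /andP [xs us]; rewrite inE count_cat count_nseq /=.
case: (eqVneq x j) => [xj _ | ne]; last first.
  by rewrite mul0n add0n /= => js; apply: IH.
rewrite xj mul1n.
suff -> : count (pred1 j) (flatten [seq nseq (f a) a | a <- s]) = 0 by rewrite addn0.
apply/eqP; rewrite -leqn0 leqNgt -has_count; apply/hasP => [[y /mem_flatten_nseq [ys _]]] /= /eqP yj.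
by move: xs; rewrite xj -yj ys.
Qed.

Lemma mem_zip2 (S T : eqType) (s : seq S) (t : seq T) x y :
  (x, y) \in zip s t -> x \in s /\ y \in t.
Proof.
elim: s t => [|a s IH] [|b t] //=; rewrite ?in_nil //.
rewrite inE => /orP [/eqP [<- <-]|/IH [h1 h2]].
  by rewrite eqxx mem_head.
by rewrite h1 orbT inE h2 orbT.
Qed.

Lemma sum_pos_ex (T : eqType) (s : seq T) (F : T -> nat) :
  0 < \sum_(o <- s) F o -> exists o, (o \in s) /\ 0 < F o.
Proof.
elim: s => [|x s IH]; first by rewrite big_nil.
rewrite big_cons; case: (posnP (F x)) => [-> /IH [o [os Fo]]|Fx _].
  by exists o; rewrite inE os orbT.
by exists x; rewrite mem_head.
Qed.

Lemma sum_delta (T : eqType) (s : seq T) j (c : T -> nat) :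
  uniq s -> j \in s -> \sum_(x <- s) (x == j) * c x = c j.
Proof.
elim: s => [|x s IH] //= /andP [xs us]; rewrite inE big_cons.
case: (eqVneq x j) => [xj _ | ne /= js]; last by rewrite mul0n add0n IH.
rewrite mul1n big1_seq ?addn0 -?xj // => y /andP [_ ys].
by case: (eqVneq y x) => [yx|] //; move: xs; rewrite -yx ys.
Qed.

Lemma count_flatten_sum T (P : pred T) (U : Type) (F : U -> seq T) s :
  count P (flatten [seq F x | x <- s]) = \sum_(x <- s) count P (F x).
Proof. by elim: s => [|x s IH] /=; rewrite ?big_nil ?big_cons // count_cat IH. Qed.

Lemma flatten_nseq_const T (U : Type) (F : U -> nat) (a : T) s :
  flatten [seq nseq (F o) a | o <- s] = nseq (\sum_(o <- s) F o) a.
Proof. by elim: s => [|x s IH] /=; rewrite ?big_nil ?big_cons // IH nseqD. Qed.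

Lemma pairwise_flatten_intro (T : eqType) (r : rel T) (ss : seq (seq T)) :
  (forall s, s \in ss -> pairwise r s) -> pairwise (fun s t => allrel r s t) ss ->
  pairwise r (flatten ss).
Proof.
elim: ss => [|s ss IH] //= H /andP [Hall Hp].
rewrite pairwise_cat H ?mem_head // IH ?andbT //; last first.
  by move=> t ts; apply: H; rewrite inE ts orbT.
apply/allrelP => x y xs /flattenP [t ts yt].
by have h1 := allP Hall t ts; move/allrelP: h1; apply.
Qed.

Lemma pairwise_nseq T (r : rel T) k x : r x x -> pairwise r (nseq k x).
Proof.
move=> rxx; elim: k => //= k ->; rewrite andbT.
by elim: k => //= k ->; rewrite rxx.
Qed.

Lemma sorted_blocks (T : eqType) (s : seq T) (f : T -> nat) :
  uniq s -> pairwise (fun x y => index x s <= index y s) (flatten [seq nseq (f a) a | a <- s]).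
Proof.
move=> us; apply: pairwise_flatten_intro.
  by move=> t /mapP [a _ ->]; apply: pairwise_nseq.
rewrite pairwise_map; case E: s => [//|x0 s']; rewrite -E.
apply/(pairwiseP x0) => i j; rewrite !inE => iz jz ij /=.
apply/allrelP => x y; rewrite !mem_nseq => /andP [_ /eqP ->] /andP [_ /eqP ->].
by rewrite !index_uniq // ltnW.
Qed.

Lemma count_blocks (T : eqType) (P : pred T) (s : seq T) (f : T -> nat) :
  count P (flatten [seq nseq (f a) a | a <- s]) = \sum_(a <- s) P a * f a.
Proof.
rewrite count_flatten_sum; apply: eq_bigr => a _.
by rewrite count_nseq mulnC.
Qed.

Lemma sum_pair1 (T U : eqType) (oo : seq U) (x j : T) (y : U) :
  uniq oo -> y \in oo -> \sum_(o <- oo) ((x, y) == (j, o) : nat) = (x == j).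
Proof.
move=> uo yo; case: (eqVneq x j) => [-> | ne].
  rewrite -[RHS](sum_delta (fun _ => 1) uo yo); apply: eq_bigr => o _.
  by rewrite xpair_eqE eqxx eq_sym muln1.
by rewrite big1 // => o _; rewrite xpair_eqE (negbTE ne).
Qed.

Lemma sum_pair2 (T U : eqType) (ii : seq T) (x : T) (y j : U) :
  uniq ii -> x \in ii -> \sum_(i <- ii) ((x, y) == (i, j) : nat) = (y == j).
Proof.
move=> uo yo; case: (eqVneq y j) => [-> | ne].
  rewrite -[RHS](sum_delta (fun _ => 1) uo yo); apply: eq_bigr => o _.
  by rewrite xpair_eqE eqxx eq_sym muln1 andbT.
by rewrite big1 // => o _; rewrite xpair_eqE (negbTE ne) andbF.
Qed.

Lemma sum_count_zip1 (T U : eqType) (oo : seq U) (s : seq T) (t : seq U) j :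
  uniq oo -> all (mem oo) t -> size s = size t ->
  \sum_(o <- oo) count (pred1 (j, o)) (zip s t) = count (pred1 j) s.
Proof.
move=> uo; elim: s t => [|x s IH] [|y t] //=; first by rewrite big1.
move=> /andP [yo ht] [st]; rewrite big_split /= IH // sum_pair1 //.
Qed.

Lemma sum_count_zip2 (T U : eqType) (ii : seq T) (s : seq T) (t : seq U) j :
  uniq ii -> all (mem ii) s -> size s = size t ->
  \sum_(i <- ii) count (pred1 (i, j)) (zip s t) = count (pred1 j) t.
Proof.
move=> uo; elim: s t => [|x s IH] [|y t] //=; first by rewrite big1.
move=> /andP [yo ht] [st]; rewrite big_split /= IH // sum_pair2 //.
Qed.

Section Pos.
Variables n p q : nat.
Hypothesis pq : p < q.
Hypothesis qn : q <= n.

Local Notation io := (inner_order p q).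
Local Notation oo := (outer_order n p q).

Lemma mem_io x : (x \in io) = inside p q x.
Proof. rewrite /inner_order mem_iota /inside; apply/idP/idP => /andP [h1 h2]; apply/andP; lia. Qed.

Lemma uniq_io : uniq io.
Proof. exact: iota_uniq. Qed.

Lemma mem_oo x : (x \in oo) = (x <= n) && ~~ inside p q x.
Proof.
rewrite /outer_order mem_cat !mem_rev !mem_iota /inside.
apply/idP/idP.
  by case/orP => /andP [h1 h2]; apply/andP; split; lia.
case/andP=> h1 h2; apply/orP.
case: (ltnP x p) => h3; [left | right]; apply/andP; split; lia.
Qed.

Lemma uniq_oo : uniq oo.
Proof.
rewrite /outer_order cat_uniq !rev_uniq !iota_uniq /= andbT.
apply/hasPn => x; rewrite mem_rev mem_iota => /andP [h1 h2].
by rewrite mem_rev mem_iota; apply/negP => /andP [h3 h4]; lia.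
Qed.

Lemma rank_lo o : o < p -> index o oo = p - 1 - o.
Proof.
move=> op.
have E : nth 0 oo (p - 1 - o) = o.
  rewrite /outer_order nth_cat size_rev size_iota ifT; last by lia.
  rewrite nth_rev ?size_iota; last by lia.
  rewrite nth_iota; lia.
rewrite -{1}E index_uniq ?uniq_oo //.
rewrite /outer_order size_cat !size_rev !size_iota; lia.
Qed.

Lemma rank_hi o : q < o -> o <= n -> index o oo = p + (n - o).
Proof.
move=> qo on.
have E : nth 0 oo (p + (n - o)) = o.
  rewrite /outer_order nth_cat size_rev size_iota ifF; last by lia.
  rewrite nth_rev ?size_iota; last by lia.
  rewrite nth_iota; lia.
rewrite -{1}E index_uniq ?uniq_oo //.
rewrite /outer_order size_cat !size_rev !size_iota; lia.
Qed.

Lemma refl_in i : inside p q i -> refl p q i = p + q - i.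
Proof. by rewrite /refl => ->. Qed.
Lemma refl_out i : ~~ inside p q i -> refl p q i = i.
Proof. by rewrite /refl => /negbTE ->. Qed.
Lemma inside_refl i : inside p q i -> inside p q (refl p q i).
Proof. move=> h; rewrite refl_in //; move: h; rewrite /inside => /andP [h1 h2]; apply/andP; lia. Qed.
Lemma reflK i : refl p q (refl p q i) = i.
Proof.
case h: (inside p q i); last by rewrite !refl_out ?h.
rewrite refl_in ?inside_refl // refl_in //; move: h; rewrite /inside => /andP [h1 h2]; lia.
Qed.
Lemma inside_le i : inside p q i -> i <= n.
Proof. rewrite /inside => /andP [h1 h2]; lia. Qed.

End Pos.

Section Act.
Variables (n p q : nat) (m : nat -> nat -> nat).
Hypothesis pq : p < q.
Hypothesis qn : q <= n.
Hypothesis msym : forall a b, m a b = m b a.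

Local Notation io := (inner_order p q).
Local Notation oo := (outer_order n p q).
Local Notation N := (act_arcs n p q m).
Local Notation cir := (cross_in_refl n p q m).
Local Notation co := (cross_out n p q m).
Local Notation cr := (zip cir co).
Local Notation rf := (refl p q).

Let mio x : (x \in io) = inside p q x := @mem_io n p q pq qn x.
Let moo x : (x \in oo) = (x <= n) && ~~ inside p q x := @mem_oo n p q pq qn x.
Let insr i : inside p q i -> inside p q (rf i) := @inside_refl n p q pq qn i.
Let rK i : rf (rf i) = i := @reflK n p q pq qn i.
Let uoo : uniq oo := @uniq_oo n p q pq qn.

Lemma N_in a b : inside p q a -> inside p q b -> N a b = m (rf a) (rf b).
Proof. by rewrite /act_arcs => -> ->. Qed.
Lemma N_out a b : ~~ inside p q a -> ~~ inside p q b -> N a b = m a b.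
Proof. by rewrite /act_arcs => /negbTE -> /negbTE ->. Qed.
Lemma N_mix1 a b : inside p q a -> ~~ inside p q b -> N a b = count (pred1 (a, b)) cr.
Proof. by rewrite /act_arcs => -> /negbTE ->. Qed.
Lemma N_mix2 a b : ~~ inside p q a -> inside p q b -> N a b = count (pred1 (b, a)) cr.
Proof. by rewrite /act_arcs => /negbTE -> ->. Qed.

Lemma N_sym a b : N a b = N b a.
Proof.
case ha: (inside p q a); case hb: (inside p q b).
- by rewrite !N_in ?ha ?hb.
- by rewrite N_mix1 ?ha ?hb // N_mix2 ?ha ?hb.
- by rewrite N_mix2 ?ha ?hb // N_mix1 ?ha ?hb.
- by rewrite !N_out ?ha ?hb.
Qed.

Lemma sum_refl (F : nat -> nat) : \sum_(a <- io) F (rf a) = \sum_(a <- io) F a.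
Proof.
rewrite -(big_map rf xpredT F); apply: perm_big; apply: uniq_perm.
- rewrite map_inj_in_uniq ?uniq_io // => x y; rewrite !mio => hx hy.
  by move/(congr1 rf); rewrite !rK.
- exact: uniq_io.
move=> x; apply/mapP/idP => [[y yi ->]|xi].
  by rewrite mio insr // -mio.
by exists (rf x); rewrite ?rK // mio insr // -mio.
Qed.

Lemma size_cr : size cir = size co.
Proof.
rewrite -!(count_predT) /cross_in_refl /cross_out !count_blocks.
transitivity (\sum_(a <- io) \sum_(o <- oo) m a o).
  rewrite -(sum_refl (fun a => \sum_(o <- oo) m a o)); apply: eq_bigr => a _ /=.
  by rewrite mul1n.
by rewrite exchange_big; apply: eq_bigr => o _; rewrite mul1n.
Qed.

Lemma all_co : all (mem oo) co.
Proof. by apply/allP => x /mem_flatten_nseq []. Qed.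
Lemma all_cir : all (mem io) cir.
Proof. by apply/allP => x /mem_flatten_nseq []. Qed.

Lemma count_cir j : inside p q j -> count (pred1 j) cir = \sum_(o <- oo) m (rf j) o.
Proof. by move=> h; rewrite count_flatten_nseq ?uniq_io ?mio. Qed.
Lemma count_co o : o \in oo -> count (pred1 o) co = \sum_(a <- io) m a o.
Proof. by move=> h; rewrite count_flatten_nseq ?uniq_oo. Qed.

Lemma rowsum_N j : inside p q j -> \sum_(o <- oo) N j o = \sum_(o <- oo) m (rf j) o.
Proof.
move=> h; rewrite -count_cir // -(sum_count_zip1 j (uoo) all_co size_cr).
apply: eq_big_seq => o; rewrite moo => /andP [_ ho]; exact: N_mix1.
Qed.

Lemma colsum_N o : o \in oo -> \sum_(a <- io) N a o = \sum_(a <- io) m a o.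
Proof.
move=> h; rewrite -count_co // -(sum_count_zip2 o (uniq_io p q) all_cir size_cr).
apply: eq_big_seq => a; rewrite mio => ha; apply: N_mix1 => //.
by move: h; rewrite moo => /andP [].
Qed.

Lemma mix_pos i o : 0 < count (pred1 (i, o)) cr ->
  [/\ o \in oo, i \in io, (exists o', o' \in oo /\ 0 < m (rf i) o')
    & (exists i', i' \in io /\ 0 < m i' o)].
Proof.
rewrite -has_count => /hasP [[x y] /mem_zip2 [xs ys]] /= /eqP [<- <-].
have [xi /sum_pos_ex [o' [h1 h2]]] := mem_flatten_nseq xs.
have [yo /sum_pos_ex [i' [h3 h4]]] := mem_flatten_nseq ys.
by split => //; [exists o' | exists i'].
Qed.

Lemma mono_new i o i' o' : (i, o) \in cr -> (i', o') \in cr -> i < i' ->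
  index o oo <= index o' oo.
Proof.
move=> /(nthP (0,0)) [k kz ek] /(nthP (0,0)) [k' kz' ek'] ii.
move: ek ek'; rewrite !nth_zip_cond kz kz' /= => -[ek1 ek2] [ek1' ek2'].
move: kz kz'; rewrite size_zip !leq_min => /andP [k1 k2] /andP [k1' k2'].
have sc := sorted_blocks (fun a => \sum_(o <- oo) m (rf a) o) (uniq_io p q).
have so := sorted_blocks (fun o => \sum_(a <- io) m a o) (uoo).
have tr : forall (T : eqType) (s : seq T), transitive (fun x y => index x s <= index y s).
  by move=> T s y x z; apply: leq_trans.
rewrite -(sorted_pairwise (tr _ io)) in sc.
rewrite -(sorted_pairwise (tr _ oo)) in so.
case: (ltnP k k') => kk.
  have := sorted_leq_nth (tr _ oo) (fun x => leqnn _) 0 so; rewrite -ek2 -ek2'; apply => //; exact: ltnW.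
have := sorted_leq_nth (tr _ io) (fun x => leqnn _) 0 sc k' k.
rewrite ek1 ek1' !inE => /(_ k1' k1 kk).
have hi : i \in io by rewrite -ek1; apply: (allP all_cir); apply: mem_nth.
have hi' : i' \in io by rewrite -ek1'; apply: (allP all_cir); apply: mem_nth.
have idx : forall x, x \in io -> index x io = x - p.
  move=> x; rewrite /inner_order mem_iota => h.
  have E : nth 0 (iota p (q - p).+1) (x - p) = x by rewrite nth_iota; lia.
  rewrite -{1}E index_uniq ?iota_uniq ?size_iota //; lia.
rewrite !idx //; move: hi hi'; rewrite !mio /inside; lia.
Qed.

End Act.

Lemma map_flatten_seq (U S T : Type) (f : S -> T) (F : U -> seq S) s :
  map f (flatten [seq F a | a <- s]) = flatten [seq map f (F a) | a <- s].
Proof. by elim: s => //= a s <-; rewrite map_cat. Qed.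

Lemma map_nseq' (S T : Type) (f : S -> T) k x : map f (nseq k x) = nseq k (f x).
Proof. by elim: k => //= k ->. Qed.

Definition noncross (m : nat -> nat -> nat) :=
  forall a c b d, a < c -> c < b -> b < d -> m a b = 0 \/ m c d = 0.

Section Old.
Variables (n p q : nat) (m : nat -> nat -> nat).
Hypothesis pq : p < q.
Hypothesis qn : q <= n.
Hypothesis msym : forall a b, m a b = m b a.
Hypothesis mnc : noncross m.

Local Notation io := (inner_order p q).
Local Notation oo := (outer_order n p q).
Local Notation co := (cross_out n p q m).

Let mio x : (x \in io) = inside p q x := @mem_io n p q pq qn x.
Let moo x : (x \in oo) = (x <= n) && ~~ inside p q x := @mem_oo n p q pq qn x.
Let uoo : uniq oo := @uniq_oo n p q pq qn.
Let rlo o : o < p -> index o oo = p - 1 - o := @rank_lo n p q pq qn o.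
Let rhi o : q < o -> o <= n -> index o oo = p + (n - o) := @rank_hi n p q pq qn o.

Lemma mono_old i o i' o' : i \in io -> i' \in io -> i < i' -> o \in oo -> o' \in oo ->
  0 < m i o -> 0 < m i' o' -> index o oo <= index o' oo.
Proof.
rewrite !mio !moo /inside => /andP [h1 h2] /andP [h3 h4] ii /andP [on ho] /andP [on' ho'] p1 p2.
rewrite leqNgt; apply/negP => hh.
have ho2 : o < p \/ q < o by move: ho; rewrite negb_and -!ltnNge => /orP []; auto.
have ho2' : o' < p \/ q < o' by move: ho'; rewrite negb_and -!ltnNge => /orP []; auto.
case: ho2 => ho2; case: ho2' => ho2'; move: hh;
  rewrite ?(rlo ho2) ?(rlo ho2') ?(rhi ho2 on) ?(rhi ho2' on') => hh.
- have [e|e] : m o i = 0 \/ m o' i' = 0 by apply: mnc; lia.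
    by move: p1; rewrite msym e.
  by move: p2; rewrite msym e.
- lia.
- have [e|e] : m o' i' = 0 \/ m i o = 0 by apply: mnc; lia.
    by move: p2; rewrite msym e.
  by move: p1; rewrite e.
- have [e|e] : m i o = 0 \/ m i' o' = 0 by apply: mnc; lia.
    by move: p1; rewrite e.
  by move: p2; rewrite e.
Qed.

Definition Lseq := flatten [seq flatten [seq nseq (m a o) (a, o) | o <- oo] | a <- io].

Lemma unzip1_L : unzip1 Lseq = flatten [seq nseq (\sum_(o <- oo) m a o) a | a <- io].
Proof.
rewrite /unzip1 /Lseq map_flatten_seq; congr flatten; apply: eq_map => a.
rewrite map_flatten_seq -flatten_nseq_const; congr flatten; apply: eq_map => o.
by rewrite map_nseq'.
Qed.

Let L2 := flatten [seq flatten [seq nseq (m a o) o | o <- oo] | a <- io].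

Lemma unzip2_L2 : unzip2 Lseq = L2.
Proof.
rewrite /unzip2 /Lseq map_flatten_seq; congr flatten; apply: eq_map => a.
rewrite map_flatten_seq; congr flatten; apply: eq_map => o.
by rewrite map_nseq'.
Qed.

Let rr := fun x y => index x oo <= index y oo.
Let trr : transitive rr.
Proof. by move=> y x z; apply: leq_trans. Qed.

Lemma L2_sorted : pairwise rr L2.
Proof.
apply: pairwise_flatten_intro.
  by move=> t /mapP [a _ ->]; apply: sorted_blocks.
rewrite pairwise_map; apply/(pairwiseP 0) => i j; rewrite !inE => iz jz ij /=.
apply/allrelP => x y /mem_flatten_nseq [xo px] /mem_flatten_nseq [yo py].
apply: (mono_old _ _ _ xo yo px py); try (apply: mem_nth; done).
move: iz jz; rewrite /inner_order size_iota => iz jz.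
by rewrite !nth_iota //; lia.
Qed.

Lemma L2_perm : perm_eq L2 co.
Proof.
apply/permP => P; rewrite /L2 /cross_out count_flatten_sum count_blocks.
under eq_bigr => a _ do rewrite count_blocks.
rewrite exchange_big; apply: eq_bigr => o _; rewrite big_distrr //.
Qed.

Lemma all_L2 : all (mem oo) L2.
Proof.
apply/allP => x /flattenP [t /mapP [a _ ->]] /mem_flatten_nseq [] //.
Qed.

Lemma L2_co : L2 = co.
Proof.
have key : forall s, all (mem oo) s -> map (nth 0 oo) (map (index^~ oo) s) = s.
  move=> s /allP hs; rewrite -map_comp -[RHS]map_id; apply/eq_in_map => x xs /=.
  by rewrite nth_index //; exact: hs.
have cco : all (mem oo) co by apply/allP => x /mem_flatten_nseq [].
rewrite -(key _ all_L2) -(key _ cco); congr map.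
apply: (sorted_eq leq_trans anti_leq).
- rewrite sorted_map sorted_pairwise //; exact: L2_sorted.
- rewrite sorted_map sorted_pairwise //; exact: sorted_blocks.
exact: perm_map L2_perm.
Qed.

Lemma count_L a o : a \in io -> o \in oo -> count (pred1 (a, o)) Lseq = m a o.
Proof.
move=> ai oi; rewrite /Lseq count_flatten_sum.
under eq_bigr => a' _ do rewrite count_flatten_sum.
rewrite -[RHS](sum_delta (fun a' => m a' o) (uniq_io p q) ai).
apply: eq_bigr => a' _.
rewrite -(sum_delta (fun o' => m a' o') uoo oi) big_distrr /=.
apply: eq_bigr => o' _; rewrite count_nseq /= xpair_eqE -mulnb.
by rewrite mulnA.
Qed.

Lemma old_NC a o : a \in io -> o \in oo ->
  m a o = count (pred1 (a, o)) (zip (flatten [seq nseq (\sum_(o <- oo) m a o) a | a <- io]) co).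
Proof.
by move=> ai oi; rewrite -unzip1_L -L2_co -unzip2_L2 zip_unzip count_L.
Qed.

End Old.

Section NC.
Variables (n p q : nat) (m : nat -> nat -> nat).
Hypothesis pq : p < q.
Hypothesis qn : q <= n.
Hypothesis msym : forall a b, m a b = m b a.
Hypothesis mnc : noncross m.

Local Notation io := (inner_order p q).
Local Notation oo := (outer_order n p q).
Local Notation N := (act_arcs n p q m).
Local Notation cr := (zip (cross_in_refl n p q m) (cross_out n p q m)).
Local Notation rf := (refl p q).

Let mio x : (x \in io) = inside p q x := @mem_io n p q pq qn x.
Let moo x : (x \in oo) = (x <= n) && ~~ inside p q x := @mem_oo n p q pq qn x.
Let rlo o : o < p -> index o oo = p - 1 - o := @rank_lo n p q pq qn o.
Let rhi o : q < o -> o <= n -> index o oo = p + (n - o) := @rank_hi n p q pq qn o.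
Let insE x : inside p q x = (p <= x) && (x <= q) := erefl.
Let rfE x : inside p q x -> rf x = p + q - x := @refl_in p q x.

Lemma mixpos1 i o : inside p q i -> ~~ inside p q o -> 0 < N i o ->
  [/\ (i, o) \in cr, o <= n, (exists o', o' \in oo /\ 0 < m (rf i) o')
    & (exists i', i' \in io /\ 0 < m i' o)].
Proof.
move=> hi ho; rewrite N_mix1 // => h; have [h1 h2 h3 h4] := mix_pos h.
split => //; first by rewrite -has_count in h; case/hasP: h => x xi /= /eqP <-.
by move: h1; rewrite moo => /andP [].
Qed.

Lemma noncross_N : noncross N.
Proof.
move=> a c b d ac cb bd.
case: (posnP (N a b)) => [->|p1]; first by left.
case: (posnP (N c d)) => [->|p2]; first by right.
exfalso.
case ia: (inside p q a); case ib: (inside p q b); case ic: (inside p q c);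
  case id: (inside p q d); move: (ia) (ib) (ic) (id); rewrite !insE => ia' ib' ic' id';
  try (exfalso; lia).
- (* all inside *)
  rewrite !N_in // in p1 p2.
  have [e|e] : m (rf d) (rf c) = 0 \/ m (rf b) (rf a) = 0.
    by apply: mnc; rewrite !rfE //; lia.
  + by move: p2; rewrite msym e.
  + by move: p1; rewrite msym e.
- (* a b c in, d out *)
  rewrite N_in // in p1.
  have [_ _ [o' [o'o po']] _] := mixpos1 ic (negbT id) p2.
  move: o'o; rewrite moo insE => /andP [o'n o'i].
  case: (ltnP o' p) => o'p.
  + have [e|e] : m o' (rf c) = 0 \/ m (rf b) (rf a) = 0.
      by apply: mnc; rewrite !rfE //; lia.
    * by move: po'; rewrite msym e.
    * by move: p1; rewrite msym e.
  + have [e|e] : m (rf b) (rf a) = 0 \/ m (rf c) o' = 0.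
      by apply: mnc; rewrite !rfE //; lia.
    * by move: p1; rewrite msym e.
    * by move: po'; rewrite e.
- (* a in, b out, c in, d out *)
  have [m1 bn _ _] := mixpos1 ia (negbT ib) p1.
  have [m2 dn _ _] := mixpos1 ic (negbT id) p2.
  have e1 : index b oo = p + (n - b) by apply: rhi; lia.
  have e2 : index d oo = p + (n - d) by apply: rhi; lia.
  have := mono_new pq qn m1 m2 ac; rewrite e1 e2; lia.
- (* a in, b out, c out, d out *)
  rewrite N_out ?ic ?id // in p2.
  have [_ _ _ [i' [i'i pi']]] := mixpos1 ia (negbT ib) p1.
  move: i'i; rewrite mio insE => i'i.
  have [e|e] : m i' b = 0 \/ m c d = 0 by apply: mnc; lia.
  + by move: pi'; rewrite e.
  + by move: p2; rewrite e.
- (* a out, b in, c in, d in *)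
  rewrite N_in // in p2; rewrite N_sym // in p1.
  have [_ _ [o' [o'o po']] _] := mixpos1 ib (negbT ia) p1.
  move: o'o; rewrite moo insE => /andP [o'n o'i].
  case: (ltnP o' p) => o'p.
  + have [e|e] : m o' (rf b) = 0 \/ m (rf d) (rf c) = 0.
      by apply: mnc; rewrite !rfE //; lia.
    * by move: po'; rewrite msym e.
    * by move: p2; rewrite msym e.
  + have [e|e] : m (rf d) (rf c) = 0 \/ m (rf b) o' = 0.
      by apply: mnc; rewrite !rfE //; lia.
    * by move: p2; rewrite msym e.
    * by move: po'; rewrite e.
- (* a out, b in, c in, d out *)
  rewrite N_sym // in p1.
  have [m1 an _ _] := mixpos1 ib (negbT ia) p1.
  have [m2 dn _ _] := mixpos1 ic (negbT id) p2.
  have e1 : index d oo = p + (n - d) by apply: rhi; lia.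
  have e2 : index a oo = p - 1 - a by apply: rlo; lia.
  have := mono_new pq qn m2 m1 cb; rewrite e1 e2; lia.
- (* a out, b in, c out, d in *)
  rewrite N_sym // in p1; rewrite N_sym // in p2.
  have [m1 an _ _] := mixpos1 ib (negbT ia) p1.
  have [m2 cn _ _] := mixpos1 id (negbT ic) p2.
  have := mono_new pq qn m1 m2 bd; rewrite !rlo //; lia.
- (* a out, b in, c out, d out *)
  rewrite N_out ?ic ?id // in p2; rewrite N_sym // in p1.
  have [_ _ _ [i' [i'i pi']]] := mixpos1 ib (negbT ia) p1.
  move: i'i; rewrite mio insE => i'i.
  have [e|e] : m a i' = 0 \/ m c d = 0 by apply: mnc; lia.
  + by move: pi'; rewrite msym e.
  + by move: p2; rewrite e.
- (* a out, b out, c in, d out *)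
  rewrite N_out ?ia ?ib // in p1.
  have [_ _ _ [i' [i'i pi']]] := mixpos1 ic (negbT id) p2.
  move: i'i; rewrite mio insE => i'i.
  have [e|e] : m a b = 0 \/ m i' d = 0 by apply: mnc; lia.
  + by move: p1; rewrite e.
  + by move: pi'; rewrite e.
- (* a out, b out, c out, d in *)
  rewrite N_out ?ia ?ib // in p1; rewrite N_sym // in p2.
  have [_ _ _ [i' [i'i pi']]] := mixpos1 id (negbT ic) p2.
  move: i'i; rewrite mio insE => i'i.
  have [e|e] : m a b = 0 \/ m c i' = 0 by apply: mnc; lia.
  + by move: p1; rewrite e.
  + by move: pi'; rewrite msym e.
- (* all out *)
  rewrite !N_out ?ia ?ib ?ic ?id // in p1 p2.
  have [e|e] : m a b = 0 \/ m c d = 0 by apply: mnc.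
  + by move: p1; rewrite e.
  + by move: p2; rewrite e.
Qed.

End NC.

Definition Gm n (M : nat -> nat -> nat) :=
  \big[gcdn/0]_(a < n.+1) \big[gcdn/0]_(b < n.+1 | a < b) M a b.

Lemma G_dvd n M a b : (forall a b, M a b = M b a) -> a != b -> a <= n -> b <= n ->
  Gm n M %| M a b.
Proof.
move=> Msym.
wlog ab : a b / a < b.
  move=> H ne an bn; case: (ltngtP a b) => h.
  - exact: H.
  - by rewrite Msym; apply: H; rewrite // eq_sym.
  - by move: ne; rewrite h eqxx.
move=> _ an bn.
have an' : a < n.+1 by [].
have bn' : b < n.+1 by [].
apply: (biggcdn_inf (Ordinal an')) => //.
by apply: (biggcdn_inf (Ordinal bn')).
Qed.

Lemma dvd_G n M h : (forall a b, a < b -> b <= n -> h %| M a b) -> h %| Gm n M.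
Proof.
move=> H; apply/dvdn_biggcdP => a _; apply/dvdn_biggcdP => b ab.
by apply: H => //; rewrite -ltnS ltn_ord.
Qed.

Section Main.
Variables (n p q : nat) (m : nat -> nat -> nat).
Hypothesis pq : p < q.
Hypothesis qn : q <= n.
Hypothesis msym : forall a b, m a b = m b a.
Hypothesis mnc : noncross m.

Local Notation io := (inner_order p q).
Local Notation oo := (outer_order n p q).
Local Notation N := (act_arcs n p q m).
Local Notation cr := (zip (cross_in_refl n p q m) (cross_out n p q m)).
Local Notation rf := (refl p q).

Let mio x : (x \in io) = inside p q x := @mem_io n p q pq qn x.
Let moo x : (x \in oo) = (x <= n) && ~~ inside p q x := @mem_oo n p q pq qn x.
Let insr i : inside p q i -> inside p q (rf i) := @inside_refl n p q pq qn i.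
Let rK i : rf (rf i) = i := @reflK n p q pq qn i.
Let insn i : inside p q i -> i <= n := @inside_le n p q pq qn i.
Let insE x : inside p q x = (p <= x) && (x <= q) := erefl.

Lemma in_out_neq i o : inside p q i -> ~~ inside p q o -> i != o.
Proof. by move=> hi ho; apply/eqP => e; move: ho; rewrite -e hi. Qed.

Lemma rf_neq a b : a != b -> rf a != rf b.
Proof. by move=> ne; apply/eqP => /(congr1 rf); rewrite !rK; apply/eqP. Qed.

Lemma dir1 : Gm n m %| Gm n N.
Proof.
set g := Gm n m.
have gm : forall x y, x != y -> x <= n -> y <= n -> g %| m x y by move=> *; apply: G_dvd.
have gcr : forall P, g %| count P cr.
  have H1 : forall a, a \in io -> g %| (fun a => \sum_(o <- oo) m (rf a) o) a.
    move=> a; rewrite mio => ai; rewrite big_seq; apply: dvdn_sum => o; rewrite moo => /andP [on oi].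
    by apply: gm => //; [apply: in_out_neq => //; apply: insr | apply: insn; apply: insr].
  have [r1 e1] := chunky_blocks H1.
  have H2 : forall o, o \in oo -> g %| (fun o => \sum_(a <- io) m a o) o.
    move=> o; rewrite moo => /andP [on oi]; rewrite big_seq; apply: dvdn_sum => a; rewrite mio => ai.
    by apply: gm => //; [apply: in_out_neq | apply: insn].
  have [r2 e2] := chunky_blocks H2.
  by move=> P; rewrite /cross_in_refl e1 /cross_out e2 zip_chunk count_chunk dvdn_mulr.
apply: dvd_G => a b ab bn.
have an : a <= n by apply: leq_trans (ltnW ab) bn.
case ia: (inside p q a); case ib: (inside p q b).
- rewrite N_in //; apply: gm; rewrite ?insn ?insr //.
  by apply: rf_neq; rewrite neq_ltn ab.
- by rewrite N_mix1 ?ib.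
- by rewrite N_mix2 ?ia.
- by rewrite N_out ?ia ?ib //; apply: gm; rewrite // neq_ltn ab.
Qed.

Lemma dir2 : Gm n N %| Gm n m.
Proof.
set h := Gm n N.
have hN : forall x y, x != y -> x <= n -> y <= n -> h %| N x y.
  by move=> *; apply: G_dvd => // *; apply: N_sym.
have key : forall a o, a \in io -> o \in oo -> h %| m a o.
  move=> a o ai oi; rewrite (old_NC pq qn msym mnc ai oi).
  have H1 : forall a, a \in io -> h %| (fun a => \sum_(o <- oo) m a o) a.
    move=> a'; rewrite mio => ai' /=.
    rewrite -{1}(rK a') -(rowsum_N m pq qn (insr ai')) big_seq; apply: dvdn_sum => o'.
    rewrite moo => /andP [on' oi'].
    by apply: hN => //; [apply: in_out_neq => //; apply: insr | apply: insn; apply: insr].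
  have [r1 e1] := chunky_blocks H1.
  have H2 : forall o, o \in oo -> h %| (fun o => \sum_(a <- io) m a o) o.
    move=> o' oi' /=; rewrite -(colsum_N m pq qn oi') big_seq; apply: dvdn_sum => a'.
    move: oi'; rewrite moo => /andP [on' oi']; rewrite mio => ai'.
    by apply: hN => //; [apply: in_out_neq | apply: insn].
  have [r2 e2] := chunky_blocks H2.
  by rewrite e1 /cross_out e2 zip_chunk count_chunk dvdn_mulr.
apply: dvd_G => a b ab bn.
have an : a <= n by apply: leq_trans (ltnW ab) bn.
case ia: (inside p q a); case ib: (inside p q b).
- have ia' := insr ia; have ib' := insr ib.
  rewrite -(rK a) -(rK b) -(N_in n m ia' ib'); apply: hN; try (apply: insn; done).
  by apply: rf_neq; rewrite neq_ltn ab.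
- by apply: key; rewrite ?mio ?moo ?ib ?bn.
- by rewrite msym; apply: key; rewrite ?mio ?moo ?ia ?an.
- rewrite -(N_out n m (negbT ia) (negbT ib)); apply: hN => //; by rewrite neq_ltn ab.
Qed.

Lemma gcd_step : Gm n N = Gm n m.
Proof. by apply/eqP; rewrite eqn_dvd dir1 dir2. Qed.

End Main.

Theorem mainTheorem5 (n : nat) (l : nat -> nat) (x : diagram)
    (w : seq (nat * nat)) :
  is_arc_diagram n l x -> all (valid_gen n) w ->
  arc_gcd n (act_word n w x) = arc_gcd n x.
Proof.
case=> _ [hsym _ _ hnc _].
suff : all (valid_gen n) w ->
  [/\ forall a b, arcs (act_word n w x) a b = arcs (act_word n w x) b a,
      noncross (arcs (act_word n w x)) &
      arc_gcd n (act_word n w x) = arc_gcd n x].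
  by move=> H /H [].
elim: w => [|[p' q'] w IH] /=; first by [].
case/andP => /andP [/andP [_ pq] qn] /IH [s1 s2 s3].
split.
- exact: N_sym.
- exact: noncross_N.
- by rewrite -s3; apply: (gcd_step pq qn s1 s2).
Qed.
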